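(* Let $\theta$ and $\rho$ be regular infinite cardinals with $\theta < \rho < \kappa$, and let $J$ be a $\kappa$-complete ideal on $\kappa$ with $NS_\kappa|E^\kappa_\theta \subseteq J$. Suppose that there is no descending $(J, I_\kappa)$-tower of length $\mathfrak{b}_\kappa$. Let $A \in J^+ \cap P(E^\kappa_\theta \cap acc(E^\kappa_{\geq\rho}))$, and let $c_\alpha \subseteq E^\kappa_{\geq\rho}\cap\alpha$ for $\alpha \in A$ be such that $\sup c_\alpha = \alpha$ and $\mathrm{o.t.}(c_\alpha) = \theta$ for every $\alpha \in A$, and $\{\alpha \in A : c_\alpha \subseteq C\} \in J^+$ for every closed unbounded $C \subseteq \kappa$. Then there is $B \in J^+ \cap P(A)$ such that $\{\alpha \in A : \exists\beta < \alpha\,(c_\alpha \setminus \beta \subseteq C)\} \in (J|B)^*$ for every closed unbounded $C \subseteq \kappa$.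
   Context: $\kappa$ is a regular uncountable cardinal. An ideal on $\kappa$ is a nonempty $J \subseteq P(\kappa)$ with $\kappa \notin J$, every bounded subset of $\kappa$ in $J$, $J$ closed under subsets and under unions of two members; $J^+ = P(\kappa)\setminus J$; for $B \in J^+$, $J|B = \{X \subseteq \kappa : X \cap B \in J\}$ and $(J|B)^* = \{X \subseteq\kappa : \kappa\setminus X \in J|B\}$; $\kappa$-complete means closed under unions of fewer than $\kappa$ members. $I_\kappa$ is the ideal of bounded subsets of $\kappa$. $acc(X) = \{\alpha \in \kappa\setminus\{0\} : \sup(X\cap\alpha)=\alpha\}$; $E^\kappa_\theta = \{\alpha \in acc(\kappa) : \mathrm{cf}(\alpha)=\theta\}$; $E^\kappa_{\geq\rho} = \{\alpha \in acc(\kappa) : \mathrm{cf}(\alpha)\geq\rho\}$; $NS_\kappa|E^\kappa_\theta = \{X : X\cap E^\kappa_\theta \text{ nonstationary}\}$. $\mathfrak{b}_\kappa$ is the least cardinality of an $F \subseteq {}^\kappa\kappa$ with no $g \in {}^\kappa\kappa$ such that $|\{\alpha : f(\alpha) \ge g(\alpha)\}| < \kappa$ for all $f \in F$. For $Y \subseteq P(\kappa)$, a descending $(J,Y)$-tower of length $\delta$ is $\langle A_\alpha : \alpha<\delta\rangle$ with each $A_\alpha \in J^+$ such that for $\alpha<\beta<\delta$: $A_\beta\setminus A_\alpha \in Y$ and $A_\alpha\setminus A_\beta \in J^+$. *)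

(* Defs.v *)
(* Ordinals below kappa are the elements of a type K equipped
   with a strict well-order [lt]; kappa itself is the order type of K.
   Subsets of kappa are predicates K -> Prop. *)
From Stdlib Require Import Classical.

Section Defs.
Variable K : Type.
Variable lt : K -> K -> Prop.

Definition card_le (A B : Type) : Prop := exists f : A -> B, forall x y, f x = f y -> x = y.
Definition card_lt (A B : Type) : Prop := card_le A B /\ ~ card_le B A.

Definition strict_well_order {D : Type} (r : D -> D -> Prop) : Prop :=
  (forall x, ~ r x x) /\ (forall x y z, r x y -> r y z -> r x z) /\
  (forall x y, r x y \/ x = y \/ r y x) /\ well_founded r.

Definition seg (a : K) : K -> Prop := fun x => lt x a.

Definition bounded (X : K -> Prop) : Prop := exists b, forall x, X x -> lt x b.

Definition regular_uncountable_cardinal : Prop :=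
  (forall a : K, card_lt {x | lt x a} K) /\        (* initial ordinal *)
  ~ card_le K nat /\
  (forall X : K -> Prop, ~ bounded X -> card_le K {x | X x}). (* regular *)

Definition ideal (J : (K -> Prop) -> Prop) : Prop :=
  (exists X, J X) /\
  ~ J (fun _ => True) /\
  (forall X, bounded X -> J X) /\
  (forall X Y, (forall x, X x -> Y x) -> J Y -> J X) /\
  (forall X Y, J X -> J Y -> J (fun x => X x \/ Y x)).

Definition kappa_complete (J : (K -> Prop) -> Prop) : Prop :=
  forall (I : Type) (F : I -> K -> Prop), card_lt I K -> (forall i, J (F i)) ->
    J (fun x => exists i, F i x).

Definition restrict (J : (K -> Prop) -> Prop) (B : K -> Prop) : (K -> Prop) -> Prop :=
  fun X => J (fun x => X x /\ B x).
Definition dual_restrict (J : (K -> Prop) -> Prop) (B : K -> Prop) : (K -> Prop) -> Prop :=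
  fun X => restrict J B (fun x => ~ X x).

Definition acc (X : K -> Prop) : K -> Prop :=
  fun a => (exists b, lt b a) /\ forall b, lt b a -> exists x, X x /\ lt b x /\ lt x a.

Definition club (C : K -> Prop) : Prop :=
  (forall b, exists x, C x /\ lt b x) /\ (forall a, acc C a -> C a).

Definition nonstationary (Y : K -> Prop) : Prop :=
  exists C, club C /\ forall x, C x -> ~ Y x.

Definition ord_iso (X Y : K -> Prop) : Prop :=
  exists f : K -> K, (forall x, X x -> Y (f x)) /\
    (forall y, Y y -> exists x, X x /\ f x = y) /\
    (forall x y, X x -> X y -> lt x y -> lt (f x) (f y)).

Definition order_type (X : K -> Prop) (g : K) : Prop := ord_iso X (seg g).

Definition cofinal_in (X : K -> Prop) (a : K) : Prop :=
  (forall x, X x -> lt x a) /\ forall b, lt b a -> exists x, X x /\ ~ lt x b.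

Definition cof (a g : K) : Prop :=
  (exists X, cofinal_in X a /\ order_type X g) /\
  forall g', (exists X, cofinal_in X a /\ order_type X g') -> ~ lt g' g.

Definition regular_infinite_cardinal (t : K) : Prop :=
  card_le nat {x | lt x t} /\ cof t t.

Definition E_eq (t : K) : K -> Prop := fun a => acc (fun _ => True) a /\ cof a t.
Definition E_ge (r : K) : K -> Prop :=
  fun a => acc (fun _ => True) a /\ exists g, cof a g /\ ~ lt g r.

Definition NS_restr_sub (t : K) (J : (K -> Prop) -> Prop) : Prop :=
  forall X, nonstationary (fun x => X x /\ E_eq t x) -> J X.

Definition unbounded_family (F : (K -> K) -> Prop) : Prop :=
  ~ exists g : K -> K, forall f, F f -> card_lt {a | ~ lt (f a) (g a)} K.

(* (D, ltD) is (the well-order of) the ordinal b_kappa: it is an initial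
   ordinal whose cardinality is the least cardinality of an unbounded family *)
Definition is_b_kappa (D : Type) (ltD : D -> D -> Prop) : Prop :=
  strict_well_order ltD /\
  (forall d : D, card_lt {e | ltD e d} D) /\
  (exists F, unbounded_family F /\ card_le D {f | F f} /\ card_le {f | F f} D) /\
  (forall F, unbounded_family F -> card_le D {f | F f}).

Definition desc_tower (J Y : (K -> Prop) -> Prop) (D : Type) (ltD : D -> D -> Prop)
  (A : D -> K -> Prop) : Prop :=
  (forall d, ~ J (A d)) /\
  forall d e, ltD d e ->
    Y (fun x => A e x /\ ~ A d x) /\ ~ J (fun x => A d x /\ ~ A e x).

End Defs.

(* Main.v *)
Require Import Defs.
From mathcomp Require Import ssreflect ssrfun ssrbool eqtype boolp wochoice.
From Stdlib Require Import Classical ClassicalEpsilon FunctionalExtensionality PropExtensionality ProofIrrelevance Wellfounded.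


Lemma sig_eq {A : Type} {P : A -> Prop} (x y : {a | P a}) : proj1_sig x = proj1_sig y -> x = y.
Proof. destruct x as [x px], y as [y py]; simpl; intros ->. f_equal. apply proof_irrelevance. Qed.

Lemma card_le_map {A B : Type} (P : A -> B -> Prop) :
  (forall a, exists b, P a b) -> (forall a a' b, P a b -> P a' b -> a = a') -> card_le A B.
Proof.
  intros Hex Hinj. exists (fun a => proj1_sig (constructive_indefinite_description _ (Hex a))).
  intros x y E. destruct (constructive_indefinite_description _ (Hex x)) as [bx Hx].
  destruct (constructive_indefinite_description _ (Hex y)) as [byy Hy]. simpl in E. subst.
  eapply Hinj; eauto.
Qed.

Lemma card_le_trans {A B C : Type} : card_le A B -> card_le B C -> card_le A C.
Proof. intros [f Hf] [g Hg]. exists (fun a => g (f a)). auto. Qed.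

Lemma card_le_sub {A : Type} (P Q : A -> Prop) : (forall x, P x -> Q x) -> card_le {x | P x} {x | Q x}.
Proof.
  intros H. exists (fun s => exist _ (proj1_sig s) (H _ (proj2_sig s))).
  intros x y E. apply sig_eq. apply (f_equal (@proj1_sig _ _)) in E. exact E.
Qed.

Lemma card_le_sigT {A : Type} (P : A -> Prop) : card_le {x | P x} A.
Proof. exists (@proj1_sig _ _). intros; apply sig_eq; auto. Qed.

Lemma card_le_Tsig {A : Type} (P : A -> Prop) : (forall x, P x) -> card_le A {x | P x}.
Proof. intros H. exists (fun a => exist _ a (H a)). intros x y E. apply (f_equal (@proj1_sig _ _)) in E. exact E. Qed.

Lemma wf_fix {D X : Type} (R : D -> D -> Prop) (wf : well_founded R) (x0 : X)
  (Phi : (D -> X) -> D -> X) :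
  (forall r r' e, (forall d, R d e -> r d = r' d) -> Phi r e = Phi r' e) ->
  exists F, forall e, F e = Phi F e.
Proof.
  intros Hloc.
  pose (step := fun e (rr : forall d, R d e -> X) =>
    Phi (fun d => match excluded_middle_informative (R d e) with
                  | left H => rr d H | right _ => x0 end) e).
  exists (Fix wf (fun _ => X) step). intros e.
  rewrite Fix_eq.
  - unfold step. apply Hloc. intros d Hd.
    destruct (excluded_middle_informative (R d e)); [reflexivity | contradiction].
  - intros x f g Hfg. unfold step. apply Hloc. intros d Hd.
    destruct (excluded_middle_informative (R d x)); auto.
Qed.

Lemma swo_irrefl {D} (R : D -> D -> Prop) : strict_well_order R -> forall x, ~ R x x.
Proof. intros [H _]; exact H. Qed.
Lemma swo_trans {D} (R : D -> D -> Prop) : strict_well_order R -> forall x y z, R x y -> R y z -> R x z.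
Proof. intros [_ [H _]]; exact H. Qed.
Lemma swo_trich {D} (R : D -> D -> Prop) : strict_well_order R -> forall x y, R x y \/ x = y \/ R y x.
Proof. intros [_ [_ [H _]]]; exact H. Qed.
Lemma swo_wf {D} (R : D -> D -> Prop) : strict_well_order R -> well_founded R.
Proof. intros [_ [_ [_ H]]]; exact H. Qed.
Lemma swo_min {D} (R : D -> D -> Prop) : strict_well_order R ->
  forall P : D -> Prop, (exists x, P x) -> exists m, P m /\ forall y, R y m -> ~ P y.
Proof.
  intros HR P [x Px]. apply NNPP; intros Hn.
  assert (forall z, Acc R z -> ~ P z).
  { intros z Hz. induction Hz as [z _ IH]. intros Pz. apply Hn. exists z. split; auto. }
  apply (H x); auto. apply (swo_wf R HR).
Qed.
Lemma swo_le_lt {D} (R : D -> D -> Prop) : strict_well_order R ->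
  forall x y z, ~ R y x -> R y z -> R x z.
Proof.
  intros HR x y z H1 H2. destruct (swo_trich R HR x y) as [H|[H|H]].
  - eapply swo_trans; eauto.
  - subst; auto.
  - contradiction.
Qed.
Lemma swo_lt_le {D} (R : D -> D -> Prop) : strict_well_order R ->
  forall x y z, R x y -> ~ R z y -> R x z.
Proof.
  intros HR x y z H1 H2. destruct (swo_trich R HR y z) as [H|[H|H]].
  - eapply swo_trans; eauto.
  - subst; auto.
  - contradiction.
Qed.
Lemma swo_asym {D} (R : D -> D -> Prop) : strict_well_order R -> forall x y, R x y -> ~ R y x.
Proof. intros HR x y H1 H2. apply (swo_irrefl R HR x). eapply swo_trans; eauto. Qed.
Lemma swo_max2 {D} (R : D -> D -> Prop) : strict_well_order R ->
  forall x y, exists m, (m = x \/ m = y) /\ ~ R m x /\ ~ R m y.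
Proof.
  intros HR x y. destruct (swo_trich R HR x y) as [H|[H|H]].
  - exists y. split; auto. split; [apply swo_asym; auto | apply swo_irrefl; auto].
  - subst. exists y. split; auto. split; apply swo_irrefl; auto.
  - exists x. split; auto. split; [apply swo_irrefl; auto | apply swo_asym; auto].
Qed.
Lemma swo_notlt {D} (R : D -> D -> Prop) : strict_well_order R -> forall x y, ~ R x y -> y = x \/ R y x.
Proof. intros HR x y H. destruct (swo_trich R HR x y) as [H1|[H1|H1]]; auto; contradiction. Qed.


Lemma nomax (K : Type) (lt : K -> K -> Prop) (Hwo : strict_well_order lt)
  (Hk : regular_uncountable_cardinal K lt) (t : K) (Ht : card_le nat {x | lt x t}) :
  forall x, exists y, lt x y.
Proof.
  intros x. apply NNPP. intros Hn.
  assert (Hmax : forall y, y <> x -> lt y x).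
  { intros y Hy. destruct (swo_trich lt Hwo y x) as [H|[H|H]]; auto; try contradiction.
    exfalso; apply Hn; eauto. }
  assert (Htx : forall y, lt y t -> lt y x).
  { intros y Hy. destruct (classic (t = x)) as [->|E]; auto.
    eapply swo_trans; eauto. }
  destruct Ht as [h0 Hh0].
  pose (h := fun n => proj1_sig (h0 n)).
  assert (Hh : forall n m, h n = h m -> n = m).
  { intros n m E. apply Hh0. apply sig_eq. exact E. }
  assert (Hhx : forall n, lt (h n) x). { intros n. apply Htx. exact (proj2_sig (h0 n)). }
  destruct Hk as [Hseg _].
  apply (proj2 (Hseg x)).
  apply (card_le_map (fun k (s : {y | lt y x}) =>
     (k = x /\ proj1_sig s = h 0) \/ (exists n, k = h n /\ proj1_sig s = h (S n)) \/
     (k <> x /\ (forall n, k <> h n) /\ proj1_sig s = k))).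
  - intros k. destruct (classic (k = x)) as [->|Ek].
    + exists (exist _ (h 0) (Hhx 0)). left; auto.
    + destruct (classic (exists n, k = h n)) as [[n ->]|Hnn].
      * exists (exist _ (h (S n)) (Hhx (S n))). right; left; eauto.
      * exists (exist _ k (Hmax k Ek)). right; right. split; auto. split; auto.
        intros n E; apply Hnn; eauto.
  - intros a a' s H1 H2.
    destruct H1 as [[-> E1]|[[n [-> E1]]|[N1 [N1' E1]]]];
    destruct H2 as [[-> E2]|[[m [-> E2]]|[N2 [N2' E2]]]]; rewrite E1 in E2;
    try congruence;
    try (apply Hh in E2; (discriminate || (injection E2 as ->; reflexivity)));
    exfalso;
    first [ apply (N2' 0); congruence | apply (N1' 0); congruence
          | apply (N2' (S n)); congruence | apply (N1' (S m)); congruence ].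
Qed.

Lemma small_bounded (K : Type) (lt : K -> K -> Prop)
  (Hk : regular_uncountable_cardinal K lt) :
  forall X : K -> Prop, ~ card_le K {x | X x} -> bounded K lt X.
Proof.
  intros X H. apply NNPP. intros Hn. apply H. destruct Hk as [_ [_ H3]]. apply H3; auto.
Qed.

Lemma image_bounded (K : Type) (lt : K -> K -> Prop)
  (Hk : regular_uncountable_cardinal K lt) :
  forall b (g : K -> K), bounded K lt (fun y => exists x, lt x b /\ y = g x).
Proof.
  intros b g. apply (small_bounded K lt Hk). intros H.
  destruct Hk as [Hseg _]. apply (proj2 (Hseg b)).
  eapply card_le_trans; [exact H|].
  apply (card_le_map (fun (s : {y | exists x, lt x b /\ y = g x}) (t : {x | lt x b}) =>
     proj1_sig s = g (proj1_sig t))).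
  - intros [y [x [Hx ->]]]. exists (exist _ x Hx). reflexivity.
  - intros s s' u E1 E2. apply sig_eq. congruence.
Qed.

Lemma nat_bounded (K : Type) (lt : K -> K -> Prop)
  (Hk : regular_uncountable_cardinal K lt) :
  forall (b : nat -> K), bounded K lt (fun y => exists n, y = b n).
Proof.
  intros b. apply (small_bounded K lt Hk). intros H.
  destruct Hk as [_ [Hnat _]]. apply Hnat.
  eapply card_le_trans; [exact H|].
  apply (card_le_map (fun (s : {y | exists n, y = b n}) (n : nat) => proj1_sig s = b n)).
  - intros [y [n ->]]. exists n. reflexivity.
  - intros s s' u E1 E2. apply sig_eq. congruence.
Qed.


Definition closure (K : Type) (lt : K -> K -> Prop) (g : K -> K) (a : K) : Prop :=
  acc K lt (fun _ => True) a /\ forall x, lt x a -> lt (g x) a.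

Lemma acc_mono (K : Type) (lt : K -> K -> Prop) (X Y : K -> Prop) :
  (forall x, X x -> Y x) -> forall a, acc K lt X a -> acc K lt Y a.
Proof.
  intros H a [H1 H2]. split; auto. intros b Hb. destruct (H2 b Hb) as [x [Xx Hx]]. eauto.
Qed.

Lemma closure_unbounded (K : Type) (lt : K -> K -> Prop) (Hwo : strict_well_order lt)
  (Hk : regular_uncountable_cardinal K lt) (Hnm : forall x, exists y, lt x y) (g : K -> K) :
  forall b, exists a, closure K lt g a /\ lt b a.
Proof.
  intros b.
  assert (Hnx : forall z, exists u, lt z u /\ forall x, lt x z -> lt (g x) u).
  { intros z. destruct (image_bounded K lt Hk z g) as [bb Hbb].
    destruct (Hnm z) as [s Hs]. destruct (swo_max2 lt Hwo bb s) as [m [_ [Hm1 Hm2]]].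
    exists m. split.
    - eapply swo_lt_le; eauto.
    - intros x Hx. apply (swo_lt_le lt Hwo _ bb _); [apply Hbb; eauto | exact Hm1]. }
  pose (nx := fun z => epsilon (inhabits z) (fun u => lt z u /\ forall x, lt x z -> lt (g x) u)).
  assert (Hnxs : forall z, lt z (nx z) /\ forall x, lt x z -> lt (g x) (nx z)).
  { intros z. apply (epsilon_spec (inhabits z) (fun u => lt z u /\ forall x, lt x z -> lt (g x) u)). apply Hnx. }
  pose (bs := fun n => nat_rect (fun _ => K) b (fun _ z => nx z) n).
  assert (Hinc : forall n, lt (bs n) (bs (S n))). { intros n. apply (proj1 (Hnxs (bs n))). }
  assert (Hcl : forall n x, lt x (bs n) -> lt (g x) (bs (S n))). { intros n. apply (proj2 (Hnxs (bs n))). }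
  destruct (nat_bounded K lt Hk bs) as [bb Hbb].
  destruct (swo_min lt Hwo (fun y => forall n, lt (bs n) y)) as [a [Ha Hamin]].
  { exists bb. intros n. apply Hbb. eauto. }
  assert (Hbelow : forall x, lt x a -> exists n, lt x (bs (S n))).
  { intros x Hx. apply Hamin in Hx. apply not_all_ex_not in Hx. destruct Hx as [n Hn].
    exists n. eapply swo_le_lt; eauto. }
  exists a. split; [split; [split|]|].
  - exists (bs 0). apply Ha.
  - intros b' Hb'. destruct (Hbelow b' Hb') as [n Hn]. exists (bs (S n)). split; auto.
  - intros x Hx. destruct (Hbelow x Hx) as [n Hn]. apply (swo_trans lt Hwo _ (bs (S (S n)))); auto.
  - apply (Ha 0).
Qed.

Lemma closure_closed (K : Type) (lt : K -> K -> Prop) (Hwo : strict_well_order lt) (g : K -> K) :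
  forall a, acc K lt (closure K lt g) a -> closure K lt g a.
Proof.
  intros a Hacc. split.
  - eapply acc_mono; [|exact Hacc]. auto.
  - intros x Hx. destruct Hacc as [_ H]. destruct (H x Hx) as [y [[_ Hy] [Hxy Hya]]].
    eapply swo_trans; eauto.
Qed.

Lemma closure_club (K : Type) (lt : K -> K -> Prop) (Hwo : strict_well_order lt)
  (Hk : regular_uncountable_cardinal K lt) (Hnm : forall x, exists y, lt x y) (g : K -> K) :
  club K lt (closure K lt g).
Proof.
  split.
  - intros b. destruct (closure_unbounded K lt Hwo Hk Hnm g b) as [a [H1 H2]]. eauto.
  - apply closure_closed; auto.
Qed.

Lemma closure_sub (K : Type) (lt : K -> K -> Prop) (Hwo : strict_well_order lt)
  (C : K -> Prop) (g : K -> K) (beta : K) :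
  club K lt C -> (forall y, ~ lt y beta -> exists z, C z /\ lt y z /\ lt z (g y)) ->
  forall a, closure K lt g a -> lt beta a -> C a.
Proof.
  intros [_ HC] Hy a [[Ha0 _] Hga] Hba. apply HC. split; auto.
  intros b Hb. destruct (swo_max2 lt Hwo b beta) as [m [Hm [Hm1 Hm2]]].
  assert (Hma : lt m a) by (destruct Hm; subst; auto).
  destruct (Hy m Hm2) as [z [Cz [Hmz Hzg]]].
  exists z. split; auto. split.
  - eapply swo_le_lt; eauto.
  - eapply swo_trans; eauto.
Qed.

Lemma club_inter (K : Type) (lt : K -> K -> Prop) (Hwo : strict_well_order lt)
  (Hk : regular_uncountable_cardinal K lt) (Hnm : forall x, exists y, lt x y) (P Q : K -> Prop) :
  club K lt P -> club K lt Q -> club K lt (fun a => P a /\ Q a).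
Proof.
  intros HP HQ.
  pose (spec := fun x u => (exists y, P y /\ lt x y /\ lt y u) /\ (exists y, Q y /\ lt x y /\ lt y u)).
  assert (Hex : forall x, exists u, spec x u).
  { intros x. destruct (proj1 HP x) as [y1 [P1 H1]]. destruct (proj1 HQ x) as [y2 [Q2 H2]].
    destruct (swo_max2 lt Hwo y1 y2) as [m [_ [Hm1 Hm2]]]. destruct (Hnm m) as [u Hu].
    exists u. split; [exists y1 | exists y2]; repeat split; auto; eapply swo_le_lt; eauto. }
  pose (g := fun x => epsilon (inhabits x) (spec x)).
  assert (Hg : forall x, spec x (g x)). { intros x. apply epsilon_spec. apply Hex. }
  split.
  - intros b. destruct (closure_unbounded K lt Hwo Hk Hnm g b) as [a [Ha Hba]].
    exists a. split; auto. split.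
    + eapply (closure_sub K lt Hwo P g b HP); eauto. intros y _. apply (proj1 (Hg y)).
    + eapply (closure_sub K lt Hwo Q g b HQ); eauto. intros y _. apply (proj2 (Hg y)).
  - intros a Ha. split.
    + apply (proj2 HP). eapply acc_mono; [|exact Ha]. intros x [H _]; auto.
    + apply (proj2 HQ). eapply acc_mono; [|exact Ha]. intros x [_ H]; auto.
Qed.


Lemma exists_strict_wo_p (T : Type) : exists W : T -> T -> Prop, strict_well_order W.
Proof.
  destruct (well_ordering_principle {classic T}) as [R HR].
  assert (Hmin : forall P : T -> Prop, (exists x, P x) -> exists z, P z /\ forall y, P y -> R z y).
  { intros P [x Px].
    destruct (HR (fun y => `[< P y >])) as [z [[Hz1 Hz2] _]].
    { exists x. rewrite /in_mem /=. by apply/asboolP. }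
    exists z. split. { move: Hz1. rewrite /in_mem /=. by move/asboolP. }
    intros y Py. apply Hz2. rewrite /in_mem /=. by apply/asboolP. }
  assert (Hrefl : forall x, R x x).
  { intros x. destruct (Hmin (fun z => z = x)) as [z [-> Hz]]; auto. eauto. }
  assert (Hanti : forall x y, R x y -> R y x -> x = y).
  { intros x y H1 H2.
    destruct (HR (fun z => `[< z = x \/ z = y >])) as [m [_ Hu]].
    { exists x. rewrite /in_mem /=. apply/asboolP. auto. }
    assert (E1 : m = x). { apply Hu. split. rewrite /in_mem /=; apply/asboolP; auto.
      intros w; rewrite /in_mem /= => /asboolP [-> | ->]; auto. }
    assert (E2 : m = y). { apply Hu. split. rewrite /in_mem /=; apply/asboolP; auto.
      intros w; rewrite /in_mem /= => /asboolP [-> | ->]; auto. }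
    congruence. }
  assert (Htot : forall x y, R x y \/ R y x).
  { intros x y. destruct (Hmin (fun z => z = x \/ z = y)) as [z [Hz Hzm]]; eauto.
    destruct Hz as [-> | ->]; auto. }
  assert (Htr : forall x y z, R x y -> R y z -> R x z).
  { intros x y z H1 H2. destruct (Hmin (fun w => w = x \/ w = y \/ w = z)) as [m [Hm Hmm]]; eauto.
    destruct Hm as [-> | [-> | ->]]; auto.
    - assert (x = y) by (apply Hanti; auto). subst; auto.
    - assert (y = z) by (apply Hanti; auto). subst; auto. }
  exists (fun x y => R x y /\ x <> y). split; [|split; [|split]].
  - intros x [_ H]; auto.
  - intros x y z [H1 N1] [H2 N2]. split; eauto. intros ->. apply N1. apply Hanti; auto.
  - intros x y. destruct (classic (x = y)) as [E|E]; auto.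
    destruct (Htot x y); [left|right; right]; split; auto.
  - intros x. apply NNPP. intros Hna.
    destruct (Hmin (fun z => ~ Acc (fun x y => R x y /\ x <> y) z)) as [m [Hm Hmm]]; eauto.
    apply Hm. constructor. intros y [Hy Ny]. apply NNPP. intros Hy'.
    apply Ny. apply Hanti; auto.
Qed.

Definition coll_Q {T : Type} (W : T -> T -> Prop) (G : T -> Prop) (r : T -> option T) (x : T) : T -> Prop :=
  fun f => G f /\ forall y, W y x -> r y <> Some f.
Definition coll_Psi {T : Type} (x : T) (Q : T -> Prop) : option T :=
  match excluded_middle_informative (exists f, Q f) with
  | left _ => Some (epsilon (inhabits x) Q)
  | right _ => None end.

Lemma collapse {T : Type} (W : T -> T -> Prop) (HW : strict_well_order W) (G : T -> Prop) :
  card_le T {f | G f} \/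
  exists x1, card_le {f | G f} {y | W y x1} /\ card_le {y | W y x1} {f | G f}.
Proof.
  destruct (wf_fix W (swo_wf W HW) None (fun r x => coll_Psi x (coll_Q W G r x))) as [s Hs].
  { intros r r' e Hrr. f_equal. apply functional_extensionality. intros f.
    apply propositional_extensionality. unfold coll_Q. split; intros [H1 H2]; split; auto;
    intros y Hy; [rewrite <- Hrr | rewrite Hrr]; auto. }
  assert (Hsome : forall x f, s x = Some f -> G f /\ forall y, W y x -> s y <> Some f).
  { intros x f E. rewrite Hs in E. unfold coll_Psi in E.
    destruct (excluded_middle_informative _) as [Hex|Hex]; [|discriminate].
    injection E as <-. apply (epsilon_spec (inhabits x) (coll_Q W G s x) Hex). }
  assert (Hnone : forall x, s x = None -> forall f, G f -> exists y, W y x /\ s y = Some f).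
  { intros x E f Gf. rewrite Hs in E. unfold coll_Psi in E.
    destruct (excluded_middle_informative _) as [Hex|Hex]; [discriminate|].
    apply NNPP. intros Hn. apply Hex. exists f. split; auto. intros y Hy E'. apply Hn; eauto. }
  assert (Hinj : forall x x' f, s x = Some f -> s x' = Some f -> x = x').
  { intros x x' f E1 E2. destruct (swo_trich W HW x x') as [H|[H|H]]; auto.
    - exfalso. apply ((proj2 (Hsome _ _ E2)) x H E1).
    - exfalso. apply ((proj2 (Hsome _ _ E1)) x' H E2). }
  destruct (classic (exists x, s x = None)) as [Hx|Hx].
  - right. destruct (swo_min W HW _ Hx) as [x1 [Hx1 Hmin]]. exists x1. split.
    + apply (card_le_map (fun (a : {f | G f}) (t : {y | W y x1}) => s (proj1_sig t) = Some (proj1_sig a))).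
      * intros [f Gf]. destruct (Hnone x1 Hx1 f Gf) as [y [Hy E]]. exists (exist _ y Hy). exact E.
      * intros a a' t E1 E2. apply sig_eq. congruence.
    + apply (card_le_map (fun (t : {y | W y x1}) (a : {f | G f}) => s (proj1_sig t) = Some (proj1_sig a))).
      * intros [y Hy]. simpl. destruct (s y) as [f|] eqn:E.
        -- exists (exist _ f (proj1 (Hsome _ _ E))). reflexivity.
        -- exfalso. apply (Hmin y Hy E).
      * intros t t' a E1 E2. apply sig_eq. eapply Hinj; eauto.
  - left. apply (card_le_map (fun (x : T) (a : {f | G f}) => s x = Some (proj1_sig a))).
    + intros x. destruct (s x) as [f|] eqn:E.
      * exists (exist _ f (proj1 (Hsome _ _ E))). reflexivity.
      * exfalso. apply Hx. eauto.
    + intros x x' a E1 E2. eapply Hinj; eauto.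
Qed.

Lemma unb_all (K : Type) (lt : K -> K -> Prop) (Hwo : strict_well_order lt) :
  unbounded_family K lt (fun _ => True).
Proof.
  intros [g Hg]. destruct (Hg g I) as [_ H]. apply H.
  apply card_le_Tsig. intros a. apply (swo_irrefl lt Hwo).
Qed.

Lemma b_exists (K : Type) (lt : K -> K -> Prop) (Hwo : strict_well_order lt) :
  exists (D : Type) (ltD : D -> D -> Prop), is_b_kappa K lt D ltD.
Proof.
  destruct (exists_strict_wo_p (K -> K)) as [W HW].
  set (T := K -> K) in *.
  pose (inD := fun x : T => forall G, unbounded_family K lt G -> ~ card_le {f | G f} {y | W y x}).
  exists {x | inD x}. exists (fun d e => W (proj1_sig d) (proj1_sig e)).
  assert (HD : strict_well_order (fun d e : {x | inD x} => W (proj1_sig d) (proj1_sig e))).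
  { split; [|split; [|split]].
    - intros x. apply (swo_irrefl W HW).
    - intros x y z. apply (swo_trans W HW).
    - intros x y. destruct (swo_trich W HW (proj1_sig x) (proj1_sig y)) as [H|[H|H]]; auto.
      right; left. apply sig_eq. auto.
    - apply (wf_inverse_image _ _ W (fun d => proj1_sig d)). apply (swo_wf W HW). }
  assert (Hdown : forall x y, inD x -> W y x -> inD y).
  { intros x y Hx Hy G HG HGy. apply (Hx G HG). eapply card_le_trans; [exact HGy|].
    apply card_le_sub. intros z Hz. eapply swo_trans; eauto. }
  assert (HG0 : exists G0, unbounded_family K lt G0 /\ card_le {f | G0 f} {x | inD x}).
  { destruct (classic (forall x, inD x)) as [Hall|Hnall].
    - exists (fun _ => True). split; [apply unb_all; auto|].
      eapply card_le_trans; [apply card_le_sigT|]. apply card_le_Tsig. auto.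
    - apply not_all_ex_not in Hnall.
      destruct (swo_min W HW _ Hnall) as [x1 [Hx1 Hmin]].
      unfold inD in Hx1. apply not_all_ex_not in Hx1. destruct Hx1 as [G HG].
      apply imply_to_and in HG. destruct HG as [HG1 HG2]. apply NNPP in HG2.
      exists G. split; auto. eapply card_le_trans; [exact HG2|].
      apply (card_le_map (fun (t : {y | W y x1}) (d : {x | inD x}) => proj1_sig t = proj1_sig d)).
      + intros [y Hy]. assert (inD y) by (apply NNPP; apply Hmin; auto).
        exists (exist _ y H). reflexivity.
      + intros t t' d E1 E2. apply sig_eq. congruence. }
  assert (Hmin : forall G, unbounded_family K lt G -> card_le {x | inD x} {f | G f}).
  { intros G HG. destruct (collapse W HW G) as [H|[x1 [H1 H2]]].
    - eapply card_le_trans; [apply card_le_sigT|exact H].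
    - eapply card_le_trans; [|exact H2].
      apply (card_le_map (fun (d : {x | inD x}) (t : {y | W y x1}) => proj1_sig t = proj1_sig d)).
      + intros [d Hd]. assert (W d x1).
        { destruct (swo_trich W HW d x1) as [E|[E|E]]; auto.
          - subst. exfalso. apply (Hd G HG H1).
          - exfalso. apply (Hd G HG). eapply card_le_trans; [exact H1|].
            apply card_le_sub. intros z Hz. eapply swo_trans; eauto. }
        exists (exist _ d H). reflexivity.
      + intros t t' d E1 E2. apply sig_eq. congruence. }
  destruct HG0 as [G0 [HG0u HG0le]].
  split; [exact HD|split; [|split]].
  - intros d. split.
    + apply (card_le_map (fun (e : {e | W (proj1_sig e) (proj1_sig d)}) (e' : {x | inD x}) => proj1_sig e = e')).
      * intros e. eauto.
      * intros e e' u E1 E2. apply sig_eq. congruence.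
    + intros Hle. apply (proj2_sig d G0 HG0u).
      eapply card_le_trans; [exact HG0le|]. eapply card_le_trans; [exact Hle|].
      apply (card_le_map (fun (e : {e | W (proj1_sig e) (proj1_sig d)}) (y : {y | W y (proj1_sig d)}) => proj1_sig (proj1_sig e) = proj1_sig y)).
      * intros [e He]. exists (exist _ (proj1_sig e) He). reflexivity.
      * intros e e' y E1 E2. apply sig_eq. apply sig_eq. congruence.
  - exists G0. split; auto.
  - exact Hmin.
Qed.


Definition Sset (K : Type) (lt : K -> K -> Prop) (A : K -> Prop) (c : K -> K -> Prop) (C : K -> Prop) (a : K) : Prop :=
  A a /\ exists b, lt b a /\ forall x, c a x -> ~ lt x b -> C x.

Definition hC (K : Type) (lt : K -> K -> Prop) (C : K -> Prop) (x : K) : K :=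
  epsilon (inhabits x) (fun y => C y /\ lt x y).

Definition gspec (K : Type) (lt : K -> K -> Prop) (D : Type) (ltD : D -> D -> Prop)
  (r : D -> K -> Prop) (e : D) (g : K -> K) : Prop :=
  forall d, ltD d e -> bounded K lt (fun x => ~ lt (hC K lt (r d) x) (g x)).

Definition gE (K : Type) (P : (K -> K) -> Prop) : K -> K := epsilon (inhabits (fun x : K => x)) P.

Definition QE (K : Type) (lt : K -> K -> Prop) (J : (K -> Prop) -> Prop) (A : K -> Prop) (c : K -> K -> Prop)
  (Pc : K -> Prop) : K -> Prop :=
  epsilon (inhabits (fun _ : K => True))
    (fun Q => club K lt Q /\ ~ J (fun a => ~ Sset K lt A c Q a /\ Sset K lt A c Pc a)).

Definition build (K : Type) (lt : K -> K -> Prop) (J : (K -> Prop) -> Prop) (A : K -> Prop) (c : K -> K -> Prop)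
  (P : (K -> K) -> Prop) : K -> Prop :=
  fun a => closure K lt (gE K P) a /\ QE K lt J A c (closure K lt (gE K P)) a.

Lemma S_pos (K : Type) (lt : K -> K -> Prop) (J : (K -> Prop) -> Prop) (HJ : ideal K lt J)
  (A : K -> Prop) (c : K -> K -> Prop) (Hlim : forall a, A a -> exists b, lt b a)
  (Hc_club : forall C, club K lt C -> ~ J (fun a => A a /\ forall x, c a x -> C x)) :
  forall C, club K lt C -> ~ J (Sset K lt A c C).
Proof.
  intros C HC HJS. apply (Hc_club C HC). destruct HJ as [_ [_ [_ [Hsub _]]]].
  apply (Hsub _ (Sset K lt A c C)); [|exact HJS]. intros a [Aa Ha]. split; auto.
  destruct (Hlim a Aa) as [b Hb]. exists b. split; auto.
Qed.

Lemma S_mono (K : Type) (lt : K -> K -> Prop) (A : K -> Prop) (c : K -> K -> Prop) (C C' : K -> Prop) :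
  (forall x, C x -> C' x) -> forall a, Sset K lt A c C a -> Sset K lt A c C' a.
Proof. intros H a [Aa [b [Hb Hx]]]. split; auto. exists b. split; auto. Qed.

Lemma S_bound (K : Type) (lt : K -> K -> Prop) (Hwo : strict_well_order lt)
  (Hnm : forall x, exists y, lt x y)
  (A : K -> Prop) (c : K -> K -> Prop)
  (Hlim : forall a, A a -> acc K lt (fun _ => True) a)
  (C : K -> Prop) (g : K -> K) (beta : K) :
  (forall a, closure K lt g a -> lt beta a -> C a) ->
  bounded K lt (fun a => Sset K lt A c (closure K lt g) a /\ ~ Sset K lt A c C a).
Proof.
  intros Hsub. destruct (Hnm beta) as [y Hy]. exists y. intros a [[Aa [b [Hb Hx]]] HnS].
  apply (swo_le_lt lt Hwo _ beta); auto. intros Hba. apply HnS.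
  destruct (proj2 (Hlim a Aa) beta Hba) as [z [_ [Hbz Hza]]].
  destruct (swo_max2 lt Hwo b z) as [m [Hm [Hm1 Hm2]]].
  split; auto. exists m. split; [destruct Hm; subst; auto|].
  intros x Hcx Hxm. apply Hsub.
  - apply Hx; auto. intros Hxb. apply Hxm. eapply swo_lt_le; eauto.
  - apply (swo_lt_le lt Hwo _ m); auto. apply (swo_lt_le lt Hwo _ z); auto.
Qed.


Lemma tower_exists (K : Type) (lt : K -> K -> Prop) (Hwo : strict_well_order lt)
  (Hk : regular_uncountable_cardinal K lt) (Hnm : forall x, exists y, lt x y)
  (J : (K -> Prop) -> Prop) (HJ : ideal K lt J)
  (A : K -> Prop) (c : K -> K -> Prop)
  (Hlim : forall a, A a -> acc K lt (fun _ => True) a)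
  (Hc_club : forall C, club K lt C -> ~ J (fun a => A a /\ forall x, c a x -> C x))
  (D : Type) (ltD : D -> D -> Prop) (HbD : is_b_kappa K lt D ltD)
  (Hfail : forall B, ~ J B -> (forall a, B a -> A a) ->
      exists C, club K lt C /\ ~ J (fun a => ~ Sset K lt A c C a /\ B a)) :
  exists A', desc_tower K J (bounded K lt) D ltD A'.
Proof.
  assert (Hlim' : forall a, A a -> exists b, lt b a) by (intros a Aa; apply (proj1 (Hlim a Aa))).
  pose proof (S_pos K lt J HJ A c Hlim' Hc_club) as HSpos.
  destruct HbD as [HD [Hseg [_ HminF]]].
  destruct (wf_fix ltD (swo_wf _ HD) (fun _ : K => True)
     (fun r e => build K lt J A c (gspec K lt D ltD r e))) as [F HF].
  { intros r r' e Hrr. f_equal. apply functional_extensionality. intros g.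
    apply propositional_extensionality. unfold gspec. split; intros H d Hd;
    [rewrite <- (Hrr d Hd) | rewrite (Hrr d Hd)]; auto. }
  assert (HQE : forall Pc, club K lt Pc -> club K lt (QE K lt J A c Pc) /\
      ~ J (fun a => ~ Sset K lt A c (QE K lt J A c Pc) a /\ Sset K lt A c Pc a)).
  { intros Pc HPc. unfold QE. apply epsilon_spec.
    apply Hfail; auto. intros a [Aa _]; auto. }
  pose (gg := fun e => gE K (gspec K lt D ltD F e)).
  assert (HFe : forall e a, F e a <-> closure K lt (gg e) a /\ QE K lt J A c (closure K lt (gg e)) a).
  { intros e a. rewrite HF. unfold build. reflexivity. }
  assert (Hclub : forall e, club K lt (F e)).
  { intros e. assert (E : F e = fun a => closure K lt (gg e) a /\ QE K lt J A c (closure K lt (gg e)) a).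
    { rewrite HF. reflexivity. }
    rewrite E. apply club_inter; auto.
    - apply closure_club; auto.
    - apply HQE. apply closure_club; auto. }
  assert (Hg : forall e, gspec K lt D ltD F e (gg e)).
  { intros e. unfold gg, gE. apply epsilon_spec.
    pose (Fam := fun f => exists d, ltD d e /\ f = hC K lt (F d)).
    assert (Hnu : ~ unbounded_family K lt Fam).
    { intros Hu. apply (proj2 (Hseg e)). eapply card_le_trans; [apply HminF; exact Hu|].
      apply (card_le_map (fun (s : {f | Fam f}) (t : {d | ltD d e}) => proj1_sig s = hC K lt (F (proj1_sig t)))).
      - intros [f [d [Hd ->]]]. exists (exist _ d Hd). reflexivity.
      - intros s s' t E1 E2. apply sig_eq. congruence. }
    unfold unbounded_family in Hnu. apply NNPP in Hnu. destruct Hnu as [g Hg].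
    exists g. intros d Hd. apply (small_bounded K lt Hk). intros Hle.
    apply (proj2 (Hg (hC K lt (F d)) (ex_intro _ d (conj Hd (Logic.eq_refl _))))). exact Hle. }
  assert (Hbd : forall d e, ltD d e ->
      bounded K lt (fun a => Sset K lt A c (closure K lt (gg e)) a /\ ~ Sset K lt A c (F d) a)).
  { intros d e Hde. destruct (Hg e d Hde) as [beta Hbeta].
    apply (S_bound K lt Hwo Hnm A c Hlim (F d) (gg e) beta).
    apply (closure_sub K lt Hwo (F d) (gg e) beta (Hclub d)).
    intros y Hy. exists (hC K lt (F d) y).
    assert (Hs : F d (hC K lt (F d) y) /\ lt y (hC K lt (F d) y)).
    { unfold hC. apply (epsilon_spec (inhabits y) (fun z => F d z /\ lt y z)). apply (proj1 (Hclub d) y). }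
    destruct Hs as [Hs1 Hs2]. split; auto. split; auto.
    apply NNPP. intros Hn. apply Hy. apply Hbeta. exact Hn. }
  exists (fun d => Sset K lt A c (F d)). split.
  - intros d. apply HSpos. apply Hclub.
  - intros d e Hde. split.
    + destruct (Hbd d e Hde) as [bb Hbb]. exists bb. intros a [H1 H2]. apply Hbb. split; auto.
      eapply S_mono; [|exact H1]. intros x Hx. apply (proj1 (proj1 (HFe e x) Hx)).
    + intros HJd. assert (Hc : club K lt (closure K lt (gg e))) by (apply closure_club; auto).
      apply (proj2 (HQE _ Hc)).
      destruct HJ as [_ [_ [Hbdd [Hsub Hun]]]].
      apply (Hsub _ (fun a => (Sset K lt A c (F d) a /\ ~ Sset K lt A c (F e) a) \/
               (Sset K lt A c (closure K lt (gg e)) a /\ ~ Sset K lt A c (F d) a))).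
      * intros a [Hna Ha]. destruct (classic (Sset K lt A c (F d) a)) as [Hd|Hd]; [left|right]; split; auto.
        intros HSe. apply Hna. eapply S_mono; [|exact HSe]. intros x Hx. apply (proj2 (proj1 (HFe e x) Hx)).
      * apply Hun; auto.
Qed.


Theorem proposition5p4 (K : Type) (lt : K -> K -> Prop)
  (Hwo : strict_well_order lt)
  (Hkappa : regular_uncountable_cardinal K lt)
  (theta rho : K)
  (Htheta : regular_infinite_cardinal K lt theta)
  (Hrho : regular_infinite_cardinal K lt rho)
  (Htr : lt theta rho)
  (J : (K -> Prop) -> Prop)
  (HJ : ideal K lt J) (HJc : kappa_complete K J)
  (HNS : NS_restr_sub K lt theta J)
  (Hnotower : forall (D : Type) (ltD : D -> D -> Prop), is_b_kappa K lt D ltD ->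
      ~ exists A : D -> K -> Prop, desc_tower K J (bounded K lt) D ltD A)
  (A : K -> Prop)
  (HA : ~ J A)
  (HAsub : forall a, A a -> E_eq K lt theta a /\ acc K lt (E_ge K lt rho) a)
  (c : K -> K -> Prop)
  (Hc_sub : forall a, A a -> forall x, c a x -> E_ge K lt rho x /\ lt x a)
  (Hc_sup : forall a, A a -> forall b, lt b a -> exists x, c a x /\ lt b x)
  (Hc_ot : forall a, A a -> order_type K lt (c a) theta)
  (Hc_club : forall C, club K lt C ->
      ~ J (fun a => A a /\ forall x, c a x -> C x)) :
  exists B : K -> Prop, ~ J B /\ (forall a, B a -> A a) /\
    forall C, club K lt C ->
      dual_restrict K J B
        (fun a => A a /\ exists b, lt b a /\ forall x, c a x -> ~ lt x b -> C x).
Proof.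
  apply NNPP. intros Hng.
  assert (Hnm : forall x, exists y, lt x y).
  { apply (nomax K lt Hwo Hkappa theta (proj1 Htheta)). }
  assert (Hlim : forall a, A a -> acc K lt (fun _ => True) a).
  { intros a Aa. apply (proj1 (proj1 (HAsub a Aa))). }
  assert (Hfail : forall B, ~ J B -> (forall a, B a -> A a) ->
      exists C, club K lt C /\ ~ J (fun a => ~ Sset K lt A c C a /\ B a)).
  { intros B HB HBA. apply NNPP. intros Hn. apply Hng. exists B. split; auto. split; auto.
    intros C HC. apply NNPP. intros Hd. apply Hn. exists C. split; auto. }
  destruct (b_exists K lt Hwo) as [D [ltD HbD]].
  apply (Hnotower D ltD HbD).
  apply (tower_exists K lt Hwo Hkappa Hnm J HJ A c Hlim Hc_club D ltD HbD Hfail).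
Qed.
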